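(* Let $\mathcal{R}=(G_0,e\to R)$ be an expanding replacement system with finite branching whose replacement graph $R$ is connected. Then there exists $i\in\mathbb{N}$ such that for every graph $G\in\Gamma(\mathcal{R})$, each collapsible subgraph of $G$ has an edge in common with at most $i$ other collapsible subgraphs of $G$.
   Context: A graph is a finite directed multigraph (loops, multiple edges allowed); isomorphisms preserve directions. A replacement system $\mathcal{R}=(G_0,e\to R)$: $G_0$ a graph, $e$ a non-loop edge from $v$ to $w$, $R$ a graph containing $v,w$ (initial and terminal vertices; others interior). Replacing an edge $\varepsilon$ of a graph means deleting it and gluing in a copy of $R$ identifying initial/terminal vertices with those of $\varepsilon$. An expansion of a graph is obtained by finitely many replacements; the full expansion sequence $G_n$ replaces all edges of $G_{n-1}$. $\mathcal{R}$ is expanding if $G_0,R$ have no isolated vertices, the initial and terminal vertices of $R$ are not adjacent, and $R$ has $\ge3$ vertices and $\ge2$ edges. $\mathcal{R}$ has finite branching if there is a uniform bound on the degrees of vertices of all $G_n$. The graph family $\Gamma(\mathcal{R})$ is the set of finite directed graphs $G$ having some expansion isomorphic to some expansion of $G_0$. Let $R_{\mathrm{loop}}$ be $R$ with initial and terminal vertices identified. A characteristic map for $R$ in $G$ is an isomorphism $\chi\colon R\to S$ or $\chi\colon R_{\mathrm{loop}}\to S$ onto a subgraph $S$ of $G$ such that for every interior vertex $u$ of $R$, every edge of $G$ incident on $\chi(u)$ lies in $S$; a collapsible subgraph of $G$ is the image of a characteristic map. *)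

(* Defs.v *)
From HB Require Import structures.
From mathcomp Require Import all_boot.

Set Implicit Arguments.
Unset Strict Implicit.
Unset Printing Implicit Defensive.

Record graph := Graph {
  gV : finType;
  gE : finType;
  gsrc : gE -> gV;
  gtgt : gE -> gV }.

Definition isomorphic (G H : graph) : Prop :=
  exists (fv : gV G -> gV H) (fe : gE G -> gE H),
    [/\ bijective fv, bijective fe,
        forall e, gsrc (fe e) = fv (gsrc e) &
        forall e, gtgt (fe e) = fv (gtgt e)].

Definition incident (G : graph) (f : gE G) (v : gV G) : Prop :=
  gsrc f = v \/ gtgt f = v.

Definition no_isolated_vertices (G : graph) : Prop :=
  forall v : gV G, exists f : gE G, incident f v.

(* number of edge-ends at v (loops count twice) *)
Definition degree (G : graph) (v : gV G) : nat :=
  #|[set f : gE G | gsrc f == v]| + #|[set f : gE G | gtgt f == v]|.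

Definition adjacent (G : graph) : rel (gV G) :=
  fun x y => [exists f : gE G, ((gsrc f == x) && (gtgt f == y))
                               || ((gsrc f == y) && (gtgt f == x))].

Definition connected_graph (G : graph) : Prop :=
  forall x y : gV G, connect (@adjacent G) x y.

(* A replacement system (G0, e -> R) with a single edge label: the base
   graph G0, the replacement graph R and the initial / terminal vertices of
   R (which are glued to the initial / terminal vertices of the replaced
   edge; e is a non-loop edge, so they are required to be distinct). *)
Record repl_system := ReplSystem {
  rs_G0 : graph;
  rs_R : graph;
  rs_init : gV rs_R;
  rs_term : gV rs_R }.

Section Replacement.
Variable RS : repl_system.
Local Notation R := (rs_R RS).
Local Notation iR := (rs_init RS).
Local Notation tR := (rs_term RS).

Definition interiorb (x : gV R) : bool := (x != iR) && (x != tR).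

Definition interior_vertex : finType := {x : gV R | interiorb x}.

Section Single.
Variables (G : graph) (eps : gE G).

Definition rep_V : finType := (gV G + interior_vertex)%type.
Definition rep_E : finType := ({f : gE G | f != eps} + gE R)%type.

Definition rep_vmap (x : gV R) : rep_V :=
  match insub x with
  | Some s => inr s
  | None => if x == iR then inl (gsrc eps) else inl (gtgt eps)
  end.

Definition rep_src (f : rep_E) : rep_V :=
  match f with
  | inl g => inl (gsrc (val g))
  | inr r => rep_vmap (gsrc r)
  end.

Definition rep_tgt (f : rep_E) : rep_V :=
  match f with
  | inl g => inl (gtgt (val g))
  | inr r => rep_vmap (gtgt r)
  end.

Definition replace_edge : graph := @Graph rep_V rep_E rep_src rep_tgt.
End Single.

Inductive expansion (G : graph) : graph -> Prop :=
  | exp_refl : expansion G G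
  | exp_step (H : graph) (eps : gE H) :
      expansion G H -> expansion G (replace_edge eps).

Section Full.
Variable G : graph.

Definition full_V : finType := (gV G + (gE G * interior_vertex))%type.
Definition full_E : finType := (gE G * gE R)%type.

Definition full_vmap (eps : gE G) (x : gV R) : full_V :=
  match insub x with
  | Some s => inr (eps, s)
  | None => if x == iR then inl (gsrc eps) else inl (gtgt eps)
  end.

Definition full_src (f : full_E) : full_V := full_vmap f.1 (gsrc f.2).
Definition full_tgt (f : full_E) : full_V := full_vmap f.1 (gtgt f.2).

Definition full_step : graph := @Graph full_V full_E full_src full_tgt.
End Full.

Fixpoint full_expansion (n : nat) : graph :=
  match n with
  | 0 => rs_G0 RS
  | n'.+1 => full_step (full_expansion n')
  end.

Definition expanding : Prop :=
  [/\ no_isolated_vertices (rs_G0 RS), no_isolated_vertices R,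
      ~ (exists f : gE R, (gsrc f = iR /\ gtgt f = tR) \/
                          (gsrc f = tR /\ gtgt f = iR)),
      3 <= #|gV R| & 2 <= #|gE R| ].

Definition finite_branching : Prop :=
  exists d : nat, forall n (v : gV (full_expansion n)), degree v <= d.

Definition in_family (G : graph) : Prop :=
  exists G' H, [/\ expansion G G', expansion (rs_G0 RS) H & isomorphic G' H].

(* R_loop: R with its initial and terminal vertices identified; the
   identified vertex is None. *)
Definition rloop_V : finType := option interior_vertex.
Definition rloop_vmap (x : gV R) : rloop_V := insub x.
Definition R_loop : graph :=
  @Graph rloop_V (gE R) (fun f => rloop_vmap (gsrc f))
                        (fun f => rloop_vmap (gtgt f)).

Definition subgraph (G : graph) : finType :=
  ({set gV G} * {set gE G})%type.

Definition iso_onto_subgraph (H G : graph) (fv : gV H -> gV G)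
    (fe : gE H -> gE G) (S : subgraph G) : Prop :=
  [/\ injective fv, injective fe,
      (forall e, gsrc (fe e) = fv (gsrc e)),
      (forall e, gtgt (fe e) = fv (gtgt e)) &
      S = ([set fv x | x : gV H], [set fe x | x : gE H])].

Definition char_map_R (G : graph) (fv : gV R -> gV G) (fe : gE R -> gE G)
    (S : subgraph G) : Prop :=
  iso_onto_subgraph fv fe S /\
  forall u : gV R, interiorb u ->
    forall f : gE G, incident f (fv u) -> f \in S.2.

Definition char_map_Rloop (G : graph) (fv : gV R_loop -> gV G)
    (fe : gE R_loop -> gE G) (S : subgraph G) : Prop :=
  iso_onto_subgraph fv fe S /\
  forall u : gV R, interiorb u ->
    forall f : gE G, incident f (fv (rloop_vmap u)) -> f \in S.2.

Definition collapsible (G : graph) (S : subgraph G) : Prop :=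
  (exists fv fe, @char_map_R G fv fe S) \/
  (exists fv fe, @char_map_Rloop G fv fe S).

End Replacement.

(* Main.v *)
Require Import Defs.
From HB Require Import structures.
From mathcomp Require Import all_boot zify.
Set Implicit Arguments. Unset Strict Implicit. Unset Printing Implicit Defensive.

Lemma card_setE (T : finType) (P : pred T) : #|[set x | P x]| = \sum_x (P x : nat).
Proof.
rewrite -sum1_card big_mkcond /=; apply: eq_bigr => x _; by rewrite inE; case: (P x).
Qed.

Lemma sum_sig (T : finType) (a : T) (F : T -> nat) :
  \sum_(g : {g : T | g != a}) F (val g) + F a = \sum_g F g.
Proof.
rewrite [RHS](bigD1 a) //= addnC; congr (_ + _).
rewrite (reindex_omap (val : {g : T | g != a} -> T) insub); last first.
  by move=> i Pi; rewrite insubT.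
by apply: eq_bigl=> -[i iA]/=; rewrite insubT ?iA /=; apply/esym/eqP.
Qed.

Definition outd (G : graph) (v : gV G) := #|[set f : gE G | gsrc f == v]|.
Definition ind (G : graph) (v : gV G) := #|[set f : gE G | gtgt f == v]|.

Section Rep.
Variable RS : repl_system.
Local Notation R := (rs_R RS).
Local Notation iR := (rs_init RS).
Local Notation tR := (rs_term RS).
Hypothesis itR : iR != tR.

Lemma noninterior (x : gV R) : ~~ interiorb x -> (x == iR) || (x == tR).
Proof. by rewrite /interiorb negb_and !negbK. Qed.

Lemma rep_vmap_inl G (eps : gE G) (x : gV R) v :
  ((rep_vmap eps x == inl v) : nat) = (x == iR) * (gsrc eps == v) + (x == tR) * (gtgt eps == v).
Proof.
rewrite /rep_vmap; case: insubP => [s Hs _ | Hn] /=.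
  by move: Hs; rewrite /interiorb => /andP[/negbTE -> /negbTE ->].
case: ifP => [/eqP-> | xi].
  by rewrite (negbTE itR) /= mul1n addn0.
move/noninterior: (Hn); rewrite xi /= => /eqP->.
by rewrite eqxx /= mul1n.
Qed.

Lemma rep_vmap_inr G (eps : gE G) (x : gV R) u :
  ((rep_vmap eps x == inr u) : nat) = (x == val u).
Proof.
rewrite /rep_vmap; case: insubP => [s Hs <- | Hn] /=.
  by rewrite val_eqE.
have -> : (x == val u) = false by apply/negbTE; apply: contra Hn => /eqP->; exact: (valP u).
by case: ifP.
Qed.


Lemma outd_rep_inl G (eps : gE G) v :
  @outd (replace_edge RS eps) (inl v) + (gsrc eps == v) =
  outd v + (gsrc eps == v) * outd iR + (gtgt eps == v) * outd tR.
Proof.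
rewrite /outd !card_setE big_sumType /=.
have E2 : \sum_(r : gE R) ((rep_vmap eps (gsrc r) == inl v) : nat) =
   (gsrc eps == v) * \sum_(r : gE R) ((gsrc r == iR) : nat) + (gtgt eps == v) * \sum_(r : gE R) ((gsrc r == tR) : nat).
  rewrite !big_distrr -big_split; apply: eq_bigr => r _ /=; rewrite rep_vmap_inl.
  by rewrite mulnC [(gtgt _ == _) * _]mulnC.
rewrite E2 -(sum_sig eps (fun g => (gsrc g == v) : nat)).
have -> : \sum_(i : {f : gE G | f != eps}) ((inl (gsrc (sval i)) == inl v :> rep_V RS G) : nat) =
          \sum_(i : {f : gE G | f != eps}) ((gsrc (val i) == v) : nat).
  by apply: eq_bigr => i _; congr nat_of_bool; apply/eqP/eqP => [[]|->].
lia.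
Qed.

Lemma ind_rep_inl G (eps : gE G) v :
  @ind (replace_edge RS eps) (inl v) + (gtgt eps == v) =
  ind v + (gsrc eps == v) * ind iR + (gtgt eps == v) * ind tR.
Proof.
rewrite /ind !card_setE big_sumType /=.
have E2 : \sum_(r : gE R) ((rep_vmap eps (gtgt r) == inl v) : nat) =
   (gsrc eps == v) * \sum_(r : gE R) ((gtgt r == iR) : nat) + (gtgt eps == v) * \sum_(r : gE R) ((gtgt r == tR) : nat).
  rewrite !big_distrr -big_split; apply: eq_bigr => r _ /=; rewrite rep_vmap_inl.
  by rewrite mulnC [(gtgt _ == _) * _]mulnC.
rewrite E2 -(sum_sig eps (fun g => (gtgt g == v) : nat)).
have -> : \sum_(i : {f : gE G | f != eps}) ((inl (gtgt (sval i)) == inl v :> rep_V RS G) : nat) =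
          \sum_(i : {f : gE G | f != eps}) ((gtgt (val i) == v) : nat).
  by apply: eq_bigr => i _; congr nat_of_bool; apply/eqP/eqP => [[]|->].
lia.
Qed.

Lemma outd_rep_inr G (eps : gE G) u :
  @outd (replace_edge RS eps) (inr u) = outd (val u).
Proof.
rewrite /outd !card_setE big_sumType /= big1 ?add0n //.
by apply: eq_bigr => r _; rewrite rep_vmap_inr.
Qed.

Lemma ind_rep_inr G (eps : gE G) u :
  @ind (replace_edge RS eps) (inr u) = ind (val u).
Proof.
rewrite /ind !card_setE big_sumType /= big1 ?add0n //.
by apply: eq_bigr => r _; rewrite rep_vmap_inr.
Qed.

Lemma full_vmap_inl G (eps : gE G) (x : gV R) v :
  ((full_vmap eps x == inl v) : nat) = (x == iR) * (gsrc eps == v) + (x == tR) * (gtgt eps == v).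
Proof.
rewrite /full_vmap; case: insubP => [s Hs _ | Hn] /=.
  by move: Hs; rewrite /interiorb => /andP[/negbTE -> /negbTE ->].
case: ifP => [/eqP-> | xi].
  by rewrite (negbTE itR) /= mul1n addn0.
move/noninterior: (Hn); rewrite xi /= => /eqP->.
by rewrite eqxx /= mul1n.
Qed.

Lemma outd_full_inl G v :
  @outd (full_step RS G) (inl v) = outd v * outd iR + ind v * outd tR.
Proof.
rewrite /outd /ind !card_setE.
rewrite -(pair_bigA _ (fun g r => ((full_vmap g (gsrc r) == inl v) : nat))) /=.
rewrite !big_distrl -big_split; apply: eq_bigr => g _ /=.
rewrite !big_distrr -big_split; apply: eq_bigr => r _ /=.
by rewrite full_vmap_inl mulnC [(gtgt _ == _) * _]mulnC.
Qed.

Lemma ind_full_inl G v :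
  @ind (full_step RS G) (inl v) = outd v * ind iR + ind v * ind tR.
Proof.
rewrite /outd /ind !card_setE.
rewrite -(pair_bigA _ (fun g r => ((full_vmap g (gtgt r) == inl v) : nat))) /=.
rewrite !big_distrl -big_split; apply: eq_bigr => g _ /=.
rewrite !big_distrr -big_split; apply: eq_bigr => r _ /=.
by rewrite full_vmap_inl mulnC [(gtgt _ == _) * _]mulnC.
Qed.
End Rep.
Section Seq.
Variables oi ii ot it : nat.
Definition step (xy : nat * nat) := (xy.1 * oi + xy.2 * ot, xy.1 * ii + xy.2 * it).
Definition S n xy := (iter n step xy).1 + (iter n step xy).2.

Lemma iter_lin n x y :
  iter n step (x, y) =
  (x * (iter n step (1, 0)).1 + y * (iter n step (0, 1)).1,
   x * (iter n step (1, 0)).2 + y * (iter n step (0, 1)).2).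
Proof.
elim: n => [|n IH] /=; first by congr pair; lia.
rewrite IH /step /=.
case: (iter n step (1,0)) => a b; case: (iter n step (0,1)) => c d /=.
congr pair; nia.
Qed.

Lemma S_lin n x y : S n (x, y) = x * S n (1, 0) + y * S n (0, 1).
Proof. rewrite /S iter_lin /=; nia. Qed.

Hypothesis Hi : 0 < oi + ii.
Hypothesis Ht : 0 < ot + it.

Lemma S_mono n xy : S n xy <= S n.+1 xy.
Proof.
rewrite /S iterS; case: (iter n step xy) => x y /=; nia.
Qed.

Lemma S_ge1 n x y : S 0 (x, y) <= S n (x, y).
Proof. elim: n => // n IH; exact: leq_trans IH (S_mono _ _). Qed.

Lemma S_stable d : (forall n, S n (1, 0) <= d) -> (forall n, S n (0, 1) <= d) ->
  exists ps pt, [/\ 0 < ps, 0 < pt, ps = oi * ps + ii * pt & pt = ot * ps + it * pt].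
Proof.
move=> B1 B2.
have key : forall n, (exists N, S N.+1 (1,0) + S N.+1 (0,1) = S N (1,0) + S N (0,1))
                     \/ n <= S n (1,0) + S n (0,1).
  elim=> [|n [H|IH]]; [by right| by left|].
  case: (eqVneq (S n.+1 (1,0) + S n.+1 (0,1)) (S n (1,0) + S n (0,1))) => [/eqP E|E].
    by left; exists n; apply/eqP.
  right; have M1 := S_mono n (1,0); have M2 := S_mono n (0,1).
  move: E; rewrite neq_ltn => /orP E; case: E => E; lia.
case: (key (2 * d).+1) => [[N EN]|]; last by move: (B1 (2*d).+1) (B2 (2*d).+1); lia.
have m1 := S_mono N (1,0); have m2 := S_mono N (0,1).
have E1 : S N.+1 (1,0) = S N (1,0) by lia.
have E2 : S N.+1 (0,1) = S N (0,1) by lia.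
exists (S N (1,0)), (S N (0,1)); split.
- exact: leq_trans (S_ge1 N 1 0).
- exact: leq_trans (S_ge1 N 0 1).
- rewrite -{1}E1 /S iterSr -/(S N _) /= -S_lin /step /=.
  by rewrite !mul1n !mul0n ?addn0 ?add0n.
- rewrite -{1}E2 /S iterSr -/(S N _) /= -S_lin /step /=.
  by rewrite !mul1n !mul0n ?addn0 ?add0n.
Qed.
End Seq.

Lemma sum_ge (T : finType) (F : T -> nat) x : F x <= \sum_y F y.
Proof. by rewrite (bigD1 x) //= leq_addr. Qed.

Section Pot.
Variable RS : repl_system.
Local Notation R := (rs_R RS).
Local Notation iR := (rs_init RS).
Local Notation tR := (rs_term RS).
Hypothesis itR : iR != tR.
Variables ps pt : nat.
Hypothesis Hps : ps = outd iR * ps + ind iR * pt.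
Hypothesis Hpt : pt = outd tR * ps + ind tR * pt.

Definition pot (G : graph) (v : gV G) := outd v * ps + ind v * pt.

Lemma pot_rep_inl G (eps : gE G) v : @pot (replace_edge RS eps) (inl v) = pot v.
Proof.
have h1 := outd_rep_inl itR eps v; have h2 := ind_rep_inl itR eps v.
rewrite /pot.
move: h1 h2; set a := @outd (replace_edge RS eps) _; set b := @ind (replace_edge RS eps) _.
move: (gsrc eps == v) (gtgt eps == v) => [] [] /=; nia.
Qed.

Lemma pot_rep_inr G (eps : gE G) u : @pot (replace_edge RS eps) (inr u) = pot (val u).
Proof. by rewrite /pot outd_rep_inr ind_rep_inr. Qed.

Lemma exp_pot_bound G0 H : expansion RS G0 H ->
  forall v : gV H, pot v <= \sum_(w : gV G0) pot w + \sum_(x : gV R) pot x.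
Proof.
elim=> [|H' eps _ IH] v.
  exact: leq_trans (sum_ge _ v) (leq_addr _ _).
case: v => [w|u].
  by rewrite pot_rep_inl; apply: IH.
by rewrite pot_rep_inr; apply: leq_trans (sum_ge _ (val u)) (leq_addl _ _).
Qed.

Lemma exp_from G G' : expansion RS G G' -> forall v : gV G, exists v' : gV G', pot v' = pot v.
Proof.
elim=> [|H' eps _ IH] v; first by exists v.
have [v' Hv'] := IH v; exists (inl v'); by rewrite pot_rep_inl.
Qed.

End Pot.

Lemma iso_deg (G H : graph) : isomorphic G H ->
  forall v : gV G, exists w : gV H, outd w = outd v /\ ind w = ind v.
Proof.
move=> [fv [fe [bv be Hs Ht]]] v; exists (fv v).
have ifv := bij_inj bv; have ife := bij_inj be.
have [ge ge1 ge2] := be.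
split.
- rewrite /outd -[in RHS](card_imset _ ife); apply: eq_card => h; rewrite inE.
  apply/eqP/imsetP => [E|[f]]; last by rewrite inE => /eqP <- ->; rewrite Hs.
  exists (ge h); last by rewrite ge2.
  by rewrite inE; apply/eqP/ifv; rewrite -Hs ge2.
- rewrite /ind -[in RHS](card_imset _ ife); apply: eq_card => h; rewrite inE.
  apply/eqP/imsetP => [E|[f]]; last by rewrite inE => /eqP <- ->; rewrite Ht.
  exists (ge h); last by rewrite ge2.
  by rewrite inE; apply/eqP/ifv; rewrite -Ht ge2.
Qed.

Fixpoint lin (RS : repl_system) (v0 : gV (rs_G0 RS)) (n : nat) : gV (full_expansion RS n) :=
  match n return gV (full_expansion RS n) with
  | 0 => v0
  | n'.+1 => (inl (lin v0 n') : full_V RS (full_expansion RS n'))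
  end.

Lemma deg_pos (G : graph) (v : gV G) : (exists f, incident f v) -> 0 < outd v + ind v.
Proof.
move=> [f [E|E]].
  have : 0 < outd v by apply/card_gt0P; exists f; rewrite inE E.
  lia.
have : 0 < ind v by apply/card_gt0P; exists f; rewrite inE E.
lia.
Qed.

Lemma exp_vert RS G G' : expansion RS G G' -> gV G -> exists _ : gV G', True.
Proof. elim=> [|H eps _ IH] v; first by exists v. by have [w _] := IH v; exists (inl w). Qed.

Lemma exp_noedge RS G0 H : (gE G0 -> False) -> expansion RS G0 H -> H = G0.
Proof.
move=> ne; elim=> [//|H' eps _ IH].
by exfalso; move: eps; rewrite IH.
Qed.

Lemma deg_bound RS : rs_init RS != rs_term RS -> expanding RS -> finite_branching RS ->
  exists D, forall G, in_family RS G -> forall v : gV G, degree v <= D.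
Proof.
move=> itR [noG0 noR _ _ _] [d Hd].
set oi := outd (rs_init RS); set ii := ind (rs_init RS).
set ot := outd (rs_term RS); set it := ind (rs_term RS).
have Hi : 0 < oi + ii by apply: deg_pos; apply: noR.
have Ht : 0 < ot + it by apply: deg_pos; apply: noR.
case: (pickP (fun _ : gE (rs_G0 RS) => true)) => [eps0 _ | none]; last first.
  exists 0 => G [G' [H [e1 e2 iso]]] v.
  have HG0 := exp_noedge (fun f => ltac:(by have := none f)) e2.
  move: iso; rewrite HG0 => -[fv [fe [_ _ _ _]]].
  have [v' _] := exp_vert e1 v.
  have [f _] := noG0 (fv v').
  by have := none f.
have vec_lin : forall (v0 : gV (rs_G0 RS)) (n : nat), (outd (lin v0 n), ind (lin v0 n)) = iter n (step oi ii ot it) (outd v0, ind v0).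
  move=> v0; elim=> [//|n IH] /=.
  by rewrite outd_full_inl // ind_full_inl // -IH.
have deg_lin : forall (v0 : gV (rs_G0 RS)) (n : nat), outd v0 * S oi ii ot it n (1,0) + ind v0 * S oi ii ot it n (0,1) <= d.
  move=> v0 n; rewrite -S_lin /S -vec_lin /=.
  exact: (Hd n (lin v0 n)).
have [ps [pt [ps1 pt1 Hps Hpt]]] : exists ps pt, [/\ 0 < ps, 0 < pt, ps = oi * ps + ii * pt & pt = ot * ps + it * pt].
  apply: (S_stable Hi Ht (d := d)) => n.
  - have := deg_lin (gsrc eps0) n.
    have : 0 < outd (gsrc eps0) by apply/card_gt0P; exists eps0; rewrite inE.
    nia.
  - have := deg_lin (gtgt eps0) n.
    have : 0 < ind (gtgt eps0) by apply/card_gt0P; exists eps0; rewrite inE.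
    nia.
exists (\sum_(w : gV (rs_G0 RS)) pot ps pt w + \sum_(x : gV (rs_R RS)) pot ps pt x).
move=> G [G' [H [e1 e2 iso]]] v.
have [v' Hv'] := exp_from itR Hps Hpt e1 v.
have [w [ow iw]] := iso_deg iso v'.
have := exp_pot_bound itR Hps Hpt e2 w.
rewrite /pot ow iw; rewrite /pot in Hv'; rewrite Hv' /degree -/(outd v) -/(ind v).
nia.
Qed.

Section Count.
Variable G : graph.
Variable D : nat.
Hypothesis HD : forall v : gV G, degree v <= D.

Definition inc (v : gV G) := [set f : gE G | (gsrc f == v) || (gtgt f == v)].

Lemma card_inc v : #|inc v| <= D.
Proof.
have -> : inc v = [set f | gsrc f == v] :|: [set f | gtgt f == v] by apply/setP => f; rewrite !inE.
by apply: leq_trans (HD v); rewrite /degree cardsU leq_subr.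
Qed.

Definition nb (h : gE G) := inc (gsrc h) :|: inc (gtgt h).

Lemma card_nb h : #|nb h| <= D + D.
Proof. by rewrite cardsU; apply: leq_trans (leq_subr _ _) _; apply: leq_add; apply: card_inc. Qed.

Lemma nb_self h : h \in nb h.
Proof. by rewrite !inE eqxx. Qed.

Definition bstep (Y : {set gE G}) := \bigcup_(h in Y) nb h.

Lemma card_bigcup (Y : {set gE G}) (F : gE G -> {set gE G}) :
  #|\bigcup_(h in Y) F h| <= \sum_(h in Y) #|F h|.
Proof.
elim/big_rec2: _ => [|h A n _ IH]; first by rewrite cards0.
rewrite cardsU; apply: leq_trans (leq_subr _ _) _; exact: leq_add.
Qed.

Lemma card_bstep Y : #|bstep Y| <= #|Y| * (D + D).
Proof.
apply: leq_trans (card_bigcup _ _) _; rewrite -sum_nat_const.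
by apply: leq_sum => h _; apply: card_nb.
Qed.

Definition ball k Y := iter k bstep Y.

Lemma card_ball k Y : #|ball k Y| <= #|Y| * (D + D) ^ k.
Proof.
elim: k => [|k IH]; first by rewrite expn0 muln1.
rewrite /ball iterS -/(ball k Y); apply: leq_trans (card_bstep _) _.
by rewrite expnSr mulnA leq_mul2r IH orbT.
Qed.

Lemma ball_adj k Y h h' : h \in ball k Y -> h' \in nb h -> h' \in ball k.+1 Y.
Proof. by move=> hk hn; rewrite /ball iterS; apply/bigcupP; exists h. Qed.

Lemma ball_sub k Y : ball k Y \subset ball k.+1 Y.
Proof. by apply/subsetP => h hk; apply: ball_adj hk (nb_self h). Qed.

Lemma ball_mono k m Y : k <= m -> ball k Y \subset ball m Y.
Proof.
elim: m => [|m IH]; first by rewrite leqn0 => /eqP->.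
rewrite leq_eqVlt => /orP[/eqP->//|]; rewrite ltnS => /IH H.
exact: subset_trans H (ball_sub _ _).
Qed.

End Count.

Section Chain.
Variable RS : repl_system.
Local Notation R := (rs_R RS).
Variable G : graph.
Variables (gv : gV R -> gV G) (ge : gE R -> gE G).
Hypothesis Hs : forall r, gsrc (ge r) = gv (gsrc r).
Hypothesis Ht : forall r, gtgt (ge r) = gv (gtgt r).
Hypothesis Rconn : connected_graph R.

Lemma share (a b : gE R) x : (gsrc a == x) || (gtgt a == x) ->
  (gsrc b == x) || (gtgt b == x) -> ge b \in nb (ge a).
Proof.
rewrite /nb /inc !inE !Hs !Ht.
by move=> /orP[]/eqP-> /orP[]/eqP->; rewrite eqxx ?orbT.
Qed.

Variable r0 : gE R.
Definition Q k x := forall r, (gsrc r == x) || (gtgt r == x) -> ge r \in ball k [set ge r0].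

Lemma Q1 : Q 1 (gsrc r0).
Proof.
move=> r Hr; apply: (ball_adj (h := ge r0)); first by rewrite /ball /= inE.
by apply: share Hr; rewrite eqxx.
Qed.

Lemma Qstep k x y : Q k x -> adjacent x y -> Q k.+1 y.
Proof.
move=> Qx /existsP[f Hf] r Hr.
have [fx fy] : ((gsrc f == x) || (gtgt f == x)) /\ ((gsrc f == y) || (gtgt f == y)).
  by case/orP: Hf => /andP[-> ->]; rewrite ?orbT.
apply: ball_adj (Qx f fx) _.
exact: share fy Hr.
Qed.

Lemma Qpath p x k : path (@adjacent R) x p -> Q k x -> Q (k + size p) (last x p).
Proof.
elim: p x k => [|y p IH] x k /=; first by rewrite addn0.
move=> /andP[axy pp] Qx; rewrite addnS -addSn.
by apply: IH pp _; apply: Qstep Qx axy.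
Qed.

Lemma chain r : ge r \in ball #|gV R| [set ge r0].
Proof.
have /connectP[p pp lp] := Rconn (gsrc r0) (gsrc r).
case: (shortenP pp) lp => p' pp' up' _ lp.
have Hs' : (1 + size p') <= #|gV R|.
  have := max_card (mem (gsrc r0 :: p')); rewrite (card_uniqP up') /=.
  by rewrite add1n.
move: (Qpath pp' Q1); rewrite /Q -lp => /(_ r); rewrite eqxx => /(_ isT) H.
exact: (subsetP (ball_mono _ Hs')).
Qed.

End Chain.

Lemma collapsible_maps RS G (T : subgraph G) : collapsible RS T ->
  exists (gv : gV (rs_R RS) -> gV G) (ge : gE (rs_R RS) -> gE G),
   [/\ (forall r, gsrc (ge r) = gv (gsrc r)), (forall r, gtgt (ge r) = gv (gtgt r)),
       T.1 = [set gv x | x : gV (rs_R RS)] & T.2 = [set ge r | r : gE (rs_R RS)]].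
Proof.
case=> [[fv [fe [[_ _ hs ht ->] _]]] | [fv [fe [[_ _ hs ht ->] _]]]].
  by exists fv, fe.
exists (fun x => fv (rloop_vmap x)), fe; split => //=.
apply/setP => v; apply/imsetP/imsetP => [[y _ ->]|[x _ ->]]; last by exists (rloop_vmap x).
case: y => [s|].
  by exists (val s) => //; rewrite /rloop_vmap valK.
exists (rs_init RS) => //; rewrite /rloop_vmap insubN //.
by rewrite /interiorb eqxx.
Qed.

Definition ends (G : graph) (E : {set gE G}) :=
  [set v | [exists h in E, (gsrc h == v) || (gtgt h == v)]].

Lemma ends_det RS G (T : subgraph G) : no_isolated_vertices (rs_R RS) -> collapsible RS T ->
  T.1 = ends T.2.
Proof.
move=> noR /collapsible_maps[gv [ge [hs ht T1 T2]]].
apply/setP => v; rewrite T1 T2 inE; apply/imsetP/existsP.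
  move=> [x _ ->]; have [f [Ef|Ef]] := noR x.
    by exists (ge f); rewrite imset_f //= hs Ef eqxx.
  by exists (ge f); rewrite imset_f //= ht Ef eqxx orbT.
move=> [h /andP[/imsetP[r _ ->] /orP[/eqP <-|/eqP <-]]].
  by exists (gsrc r); rewrite ?hs.
by exists (gtgt r); rewrite ?ht.
Qed.

Unset Implicit Arguments.

Theorem lemma4p13 (RS : repl_system) :
  rs_init RS != rs_term RS ->
  expanding RS ->
  finite_branching RS ->
  connected_graph (rs_R RS) ->
  exists i : nat,
    forall G : graph, in_family RS G ->
    forall S : subgraph G, collapsible RS S ->
    forall s : seq (subgraph G),
      uniq s ->
      (forall T, T \in s ->
         [/\ collapsible RS T, T <> S &
             exists f : gE G, f \in S.2 /\ f \in T.2]) ->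
      size s <= i.
Proof.
move=> itR ex fb Rconn.
have [D HD] := deg_bound itR ex fb.
have [_ noR _ _ _] := ex.
exists (2 ^ (#|gE (rs_R RS)| * (D + D) ^ #|gV (rs_R RS)|)).
move=> G fam S colS s us Hs.
have HDG := HD G fam.
have [gvS [geS [_ _ _ S2]]] := collapsible_maps colS.
pose C := \bigcup_(f in S.2) ball #|gV (rs_R RS)| [set f].
have sub : forall T, T \in s -> T.2 \in powerset C.
  move=> T /Hs [cT _ [f [fS fT]]].
  have [gv [ge [hs ht T1 T2]]] := collapsible_maps cT.
  rewrite powersetE; apply/subsetP => h; rewrite T2 => /imsetP[r _ ->].
  move: fT; rewrite T2 => /imsetP[r0 _ Ef].
  apply/bigcupP; exists f => //; rewrite Ef.
  exact: chain hs ht Rconn r0 r.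
have inj : {in s &, injective snd}.
  move=> T T' /Hs[cT _ _] /Hs[cT' _ _] E.
  have e1 := ends_det noR cT; have e2 := ends_det noR cT'.
  case: T E e1 {cT} => [a b]; case: T' e2 {cT'} => [a' b'] /= -> -> ->.
  by [].
have : size (map snd s) <= size (enum (powerset C)).
  apply: uniq_leq_size; first by rewrite map_inj_in_uniq.
  by move=> X /mapP[T Ts ->]; rewrite mem_enum; exact: sub.
rewrite size_map -cardE card_powerset => H; apply: leq_trans H _.
rewrite leq_exp2l //.
apply: leq_trans (card_bigcup _ _) _.
apply: (@leq_trans (\sum_(f in S.2) (D + D) ^ #|gV (rs_R RS)|)).
  apply: leq_sum => f _; apply: leq_trans (card_ball HDG _ _) _.
  by rewrite cards1 mul1n.
rewrite sum_nat_const leq_mul2r; apply/orP; right.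
rewrite S2; apply: leq_trans (leq_imset_card _ _) (max_card _).
Qed.
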